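(* Let $\mathcal C$ be a Markov category with conditionals. Then every morphism in $\mathcal C$ has an initial dilation.
   Context: A Markov category is a symmetric monoidal category $(\mathcal C,\otimes,I)$ with commutative comonoids $\mathrm{copy}_X\colon X\to X\otimes X$, $\mathrm{del}_X\colon X\to I$ compatible with $\otimes$, with $I$ terminal. For $f\colon A\to X\otimes Y$ write $f_X=(\mathrm{id}_X\otimes\mathrm{del}_Y)\circ f$. A conditional of $f$ given $X$ is a morphism $f_{|X}\colon X\otimes A\to Y$ with $f=(\mathrm{id}_X\otimes f_{|X})\circ(\mathrm{copy}_X\otimes\mathrm{id}_A)\circ(f_X\otimes\mathrm{id}_A)\circ\mathrm{copy}_A$; $\mathcal C$ has conditionals if every such $f$ has a conditional. A dilation of $p\colon A\to X$ is $\pi\colon A\to X\otimes E$ with $(\mathrm{id}_X\otimes\mathrm{del}_E)\circ\pi=p$. For a dilation $\pi\colon A\to X\otimes E$ and $f_1,f_2\colon E\to E'$, these are $\pi$-dilationally equal if for every dilation $\rho\colon A\to X\otimes E\otimes F$ of $\pi$, $(\mathrm{id}_X\otimes f_1\otimes\mathrm{id}_F)\circ\rho=(\mathrm{id}_X\otimes f_2\otimes\mathrm{id}_F)\circ\rho$. A dilation $\pi\colon A\to X\otimes E$ of $p$ is initial if for every dilation $\pi'\colon A\to X\otimes E'$ of $p$ there is $f\colon E\to E'$ with $(\mathrm{id}_X\otimes f)\circ\pi=\pi'$, unique up to $\pi$-dilational equality. *)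

(* Defs.v *)
(* Equality of
   morphisms is Leibniz equality on hom-types. *)

Set Implicit Arguments.
Unset Strict Implicit.

Record MarkovCat := {
  ob : Type;
  hom : ob -> ob -> Type;
  comp : forall A B C : ob, hom B C -> hom A B -> hom A C;
  idm : forall A : ob, hom A A;
  comp_assoc : forall A B C D (h : hom C D) (g : hom B C) (f : hom A B),
      comp h (comp g f) = comp (comp h g) f;
  comp_id_l : forall A B (f : hom A B), comp (idm B) f = f;
  comp_id_r : forall A B (f : hom A B), comp f (idm A) = f;

  tens : ob -> ob -> ob;
  tensm : forall A B C D : ob, hom A B -> hom C D -> hom (tens A C) (tens B D);
  tensm_id : forall A B, tensm (idm A) (idm B) = idm (tens A B);
  tensm_comp : forall A B C A' B' C' (g : hom B C) (f : hom A B)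
      (g' : hom B' C') (f' : hom A' B'),
      tensm (comp g f) (comp g' f') = comp (tensm g g') (tensm f f');
  unit : ob;
  assoc : forall A B C, hom (tens (tens A B) C) (tens A (tens B C));
  assoc_inv : forall A B C, hom (tens A (tens B C)) (tens (tens A B) C);
  lunit : forall A, hom (tens unit A) A;
  lunit_inv : forall A, hom A (tens unit A);
  runit : forall A, hom (tens A unit) A;
  runit_inv : forall A, hom A (tens A unit);
  swap : forall A B, hom (tens A B) (tens B A);
  assoc_iso1 : forall A B C, comp (assoc A B C) (assoc_inv A B C) = idm _;
  assoc_iso2 : forall A B C, comp (assoc_inv A B C) (assoc A B C) = idm _;
  lunit_iso1 : forall A, comp (lunit A) (lunit_inv A) = idm _;
  lunit_iso2 : forall A, comp (lunit_inv A) (lunit A) = idm _;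
  runit_iso1 : forall A, comp (runit A) (runit_inv A) = idm _;
  runit_iso2 : forall A, comp (runit_inv A) (runit A) = idm _;
  assoc_nat : forall A A' B B' C C' (f : hom A A') (g : hom B B') (h : hom C C'),
      comp (assoc A' B' C') (tensm (tensm f g) h)
      = comp (tensm f (tensm g h)) (assoc A B C);
  lunit_nat : forall A A' (f : hom A A'),
      comp (lunit A') (tensm (idm unit) f) = comp f (lunit A);
  runit_nat : forall A A' (f : hom A A'),
      comp (runit A') (tensm f (idm unit)) = comp f (runit A);
  swap_nat : forall A A' B B' (f : hom A A') (g : hom B B'),
      comp (swap A' B') (tensm f g) = comp (tensm g f) (swap A B);
  pentagon : forall A B C D,
      comp (assoc A B (tens C D)) (assoc (tens A B) C D)
      = comp (tensm (idm A) (assoc B C D))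
             (comp (assoc A (tens B C) D) (tensm (assoc A B C) (idm D)));
  triangle : forall A B,
      comp (tensm (idm A) (lunit B)) (assoc A unit B) = tensm (runit A) (idm B);
  swap_invol : forall A B, comp (swap B A) (swap A B) = idm (tens A B);
  hexagon : forall A B C,
      comp (assoc B C A) (comp (swap A (tens B C)) (assoc A B C))
      = comp (tensm (idm B) (swap A C))
             (comp (assoc B A C) (tensm (swap A B) (idm C)));

  copy : forall X, hom X (tens X X);
  del : forall X, hom X unit;
  counit_l : forall X, comp (lunit X) (comp (tensm (del X) (idm X)) (copy X)) = idm X;
  counit_r : forall X, comp (runit X) (comp (tensm (idm X) (del X)) (copy X)) = idm X;
  coassoc : forall X,
      comp (assoc X X X) (comp (tensm (copy X) (idm X)) (copy X))
      = comp (tensm (idm X) (copy X)) (copy X);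
  cocomm : forall X, comp (swap X X) (copy X) = copy X;
  copy_tens : forall X Y,
      copy (tens X Y)
      = comp (assoc_inv X Y (tens X Y))
          (comp (tensm (idm X)
                   (comp (assoc Y X Y)
                      (comp (tensm (swap X Y) (idm Y)) (assoc_inv X Y Y))))
             (comp (assoc X X (tens Y Y)) (tensm (copy X) (copy Y))));
  del_tens : forall X Y, del (tens X Y) = comp (lunit unit) (tensm (del X) (del Y));
  copy_unit : copy unit = lunit_inv unit;
  del_unit : del unit = idm unit;
  unit_terminal : forall X (f : hom X unit), f = del X
}.

Arguments hom {m} _ _.
Arguments comp {m A B C} _ _.
Arguments idm {m} A.
Arguments tens {m} _ _.
Arguments tensm {m A B C D} _ _.
Arguments unit {m}.
Arguments assoc {m} A B C.
Arguments assoc_inv {m} A B C.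
Arguments lunit {m} A.
Arguments lunit_inv {m} A.
Arguments runit {m} A.
Arguments runit_inv {m} A.
Arguments swap {m} A B.
Arguments copy {m} X.
Arguments del {m} X.

Section Defs.
Variable C : MarkovCat.

Definition marg1 {A X Y : ob C} (f : hom A (tens X Y)) : hom A X :=
  comp (runit X) (comp (tensm (idm X) (del Y)) f).

Definition is_conditional {A X Y : ob C} (f : hom A (tens X Y))
    (g : hom (tens X A) Y) : Prop :=
  f = comp (tensm (idm X) g)
        (comp (assoc X X A)
           (comp (tensm (copy X) (idm A))
              (comp (tensm (marg1 f) (idm A)) (copy A)))).

Definition has_conditionals : Prop :=
  forall (A X Y : ob C) (f : hom A (tens X Y)),
    exists g : hom (tens X A) Y, is_conditional f g.

Definition is_dilation {A X E : ob C} (p : hom A X) (pi : hom A (tens X E)) : Prop :=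
  marg1 pi = p.

Definition dil_equal {A X E E' : ob C} (pi : hom A (tens X E))
    (f1 f2 : hom E E') : Prop :=
  forall (F : ob C) (rho : hom A (tens (tens X E) F)),
    is_dilation pi rho ->
    comp (tensm (tensm (idm X) f1) (idm F)) rho
    = comp (tensm (tensm (idm X) f2) (idm F)) rho.

Definition is_initial_dilation {A X E : ob C} (p : hom A X)
    (pi : hom A (tens X E)) : Prop :=
  is_dilation p pi /\
  forall (E' : ob C) (pi' : hom A (tens X E')), is_dilation p pi' ->
    (exists f : hom E E', comp (tensm (idm X) f) pi = pi') /\
    (forall f1 f2 : hom E E',
        comp (tensm (idm X) f1) pi = pi' ->
        comp (tensm (idm X) f2) pi = pi' ->
        dil_equal pi f1 f2).

End Defs.

(* Main.v *)
From Stdlib Require Import Setoid.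
Require Import Defs.
Set Implicit Arguments.
Unset Strict Implicit.

Section S.
Variable C : MarkovCat.
Local Notation "g ∘ f" := (comp g f) (at level 42, right associativity).
Local Notation "f ⊗ g" := (tensm f g) (at level 35).
Local Notation "'α'" := (assoc _ _ _).
Local Notation "'α''" := (assoc_inv _ _ _).
Local Notation "'σ'" := (swap _ _).
Local Notation "'ι'" := (idm _).



Lemma cA {A B D E : ob C} (h : hom D E) (g : hom B D) (f : hom A B) :
  h ∘ (g ∘ f) = (h ∘ g) ∘ f.
Proof. apply comp_assoc. Qed.

Lemma rw2 {B D E : ob C} (a : hom D E) (b : hom B D) (c : hom B E) :
  a ∘ b = c -> forall Z (k : hom Z B), a ∘ (b ∘ k) = c ∘ k.
Proof. intros H Z k. rewrite cA, H. reflexivity. Qed.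

Lemma tl {A B D E : ob C} (g : hom B D) (f : hom A B) :
  (g ∘ f) ⊗ idm E = (g ⊗ idm E) ∘ (f ⊗ idm E).
Proof. rewrite <- tensm_comp, comp_id_l. reflexivity. Qed.

Lemma tr {A B D E : ob C} (g : hom B D) (f : hom A B) :
  idm E ⊗ (g ∘ f) = (idm E ⊗ g) ∘ (idm E ⊗ f).
Proof. rewrite <- tensm_comp, comp_id_l. reflexivity. Qed.

Lemma tsplit1 {A B D E : ob C} (f : hom A B) (g : hom D E) :
  f ⊗ g = (f ⊗ idm E) ∘ (idm A ⊗ g).
Proof. rewrite <- tensm_comp, comp_id_l, comp_id_r. reflexivity. Qed.

Lemma tsplit2 {A B D E : ob C} (f : hom A B) (g : hom D E) :
  f ⊗ g = (idm B ⊗ g) ∘ (f ⊗ idm D).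
Proof. rewrite <- tensm_comp, comp_id_l, comp_id_r. reflexivity. Qed.

Lemma tcomm {A B D E : ob C} (f : hom A B) (g : hom D E) :
  (f ⊗ idm E) ∘ (idm A ⊗ g) = (idm B ⊗ g) ∘ (f ⊗ idm D).
Proof. rewrite <- tsplit1, <- tsplit2. reflexivity. Qed.


Ltac ra := repeat rewrite <- cA.


Lemma tm2 {A B D A' B' D' Z : ob C} (g : hom B D) (f : hom A B) (g' : hom B' D') (f' : hom A' B') (k : hom Z _) :
  (g ⊗ g') ∘ ((f ⊗ f') ∘ k) = ((g ∘ f) ⊗ (g' ∘ f')) ∘ k.
Proof. rewrite tensm_comp, cA. reflexivity. Qed.

Lemma tlk {A B D E Z : ob C} (g : hom B D) (f : hom A B) (k : hom Z _) :
  (g ⊗ idm E) ∘ ((f ⊗ idm E) ∘ k) = ((g ∘ f) ⊗ idm E) ∘ k.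
Proof. rewrite tm2, comp_id_l. reflexivity. Qed.

Lemma trk {A B D E Z : ob C} (g : hom B D) (f : hom A B) (k : hom Z _) :
  (idm E ⊗ g) ∘ ((idm E ⊗ f) ∘ k) = (idm E ⊗ (g ∘ f)) ∘ k.
Proof. rewrite tm2, comp_id_l. reflexivity. Qed.

Lemma aa' {A B D Z : ob C} (k : hom Z _) : assoc A B D ∘ (assoc_inv A B D ∘ k) = k.
Proof. rewrite cA, assoc_iso1, comp_id_l. reflexivity. Qed.
Lemma a'a {A B D Z : ob C} (k : hom Z _) : assoc_inv A B D ∘ (assoc A B D ∘ k) = k.
Proof. rewrite cA, assoc_iso2, comp_id_l. reflexivity. Qed.

Lemma anat {A A' B B' D D' Z : ob C} (f : hom A A') (g : hom B B') (h : hom D D') (k : hom Z _) :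
  assoc A' B' D' ∘ (((f ⊗ g) ⊗ h) ∘ k) = (f ⊗ (g ⊗ h)) ∘ (assoc A B D ∘ k).
Proof. rewrite !cA, assoc_nat. reflexivity. Qed.

Lemma a'nat0 {A A' B B' D D' : ob C} (f : hom A A') (g : hom B B') (h : hom D D') :
  assoc_inv A' B' D' ∘ (f ⊗ (g ⊗ h)) = ((f ⊗ g) ⊗ h) ∘ assoc_inv A B D.
Proof.
  rewrite <- (comp_id_r (assoc_inv A' B' D' ∘ _)), <- (assoc_iso1 A B D).
  rewrite <- !cA, <- anat, a'a. reflexivity.
Qed.

Lemma a'nat {A A' B B' D D' Z : ob C} (f : hom A A') (g : hom B B') (h : hom D D') (k : hom Z _) :
  assoc_inv A' B' D' ∘ ((f ⊗ (g ⊗ h)) ∘ k) = ((f ⊗ g) ⊗ h) ∘ (assoc_inv A B D ∘ k).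
Proof. rewrite !cA, a'nat0. reflexivity. Qed.

Lemma snat {A A' B B' Z : ob C} (f : hom A A') (g : hom B B') (k : hom Z _) :
  swap A' B' ∘ ((f ⊗ g) ∘ k) = (g ⊗ f) ∘ (swap A B ∘ k).
Proof. rewrite !cA, swap_nat. reflexivity. Qed.

Lemma pent {A B D E Z : ob C} (k : hom Z _) :
  assoc A B (tens D E) ∘ (assoc (tens A B) D E ∘ k)
  = (idm A ⊗ assoc B D E) ∘ (assoc A (tens B D) E ∘ ((assoc A B D ⊗ idm E) ∘ k)).
Proof. rewrite (rw2 (pentagon _ _ _ _)). ra. reflexivity. Qed.

Lemma hex {A B D Z : ob C} (k : hom Z _) :
  assoc B D A ∘ (swap A (tens B D) ∘ (assoc A B D ∘ k))
  = (idm B ⊗ swap A D) ∘ (assoc B A D ∘ ((swap A B ⊗ idm D) ∘ k)).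
Proof. rewrite (cA (swap _ _)), (rw2 (hexagon _ _ _)). ra. reflexivity. Qed.

Lemma hexi {A B D : ob C} :
  swap A (tens B D) ∘ assoc A B D
  = assoc_inv B D A ∘ ((idm B ⊗ swap A D) ∘ (assoc B A D ∘ (swap A B ⊗ idm D))).
Proof. pose proof (f_equal (comp (assoc_inv B D A)) (hexagon A B D)) as H. rewrite a'a in H. exact H. Qed.

Lemma a_inj {A B D Z : ob C} (x y : hom Z _) :
  assoc A B D ∘ x = assoc A B D ∘ y -> x = y.
Proof. intro H. rewrite <- (a'a x), <- (a'a y), H. reflexivity. Qed.

Lemma tlid {A B Z : ob C} (f : hom A A) (k : hom Z _) : f = idm A -> (f ⊗ idm B) ∘ k = k.
Proof. intros ->. rewrite tensm_id, comp_id_l. reflexivity. Qed.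
Lemma trid {A B Z : ob C} (f : hom A A) (k : hom Z _) : f = idm A -> (idm B ⊗ f) ∘ k = k.
Proof. intros ->. rewrite tensm_id, comp_id_l. reflexivity. Qed.

Lemma anat_idl {A B D D' Z : ob C} (g : hom D D') (k : hom Z _) :
  assoc A B D' ∘ ((idm (tens A B) ⊗ g) ∘ k) = (idm A ⊗ (idm B ⊗ g)) ∘ (assoc A B D ∘ k).
Proof. rewrite <- tensm_id, anat. reflexivity. Qed.

Lemma pentV {A B D E Z : ob C} (k : hom Z _) :
  assoc A (tens B D) E ∘ ((assoc A B D ⊗ idm E) ∘ k)
  = (idm A ⊗ assoc_inv B D E) ∘ (assoc A B (tens D E) ∘ (assoc (tens A B) D E ∘ k)).
Proof. rewrite pent, trk, trid; [reflexivity | apply assoc_iso2]. Qed.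

Lemma pentW {A B D E : ob C} :
  assoc (tens A B) D E ∘ (assoc_inv A B D ⊗ idm E)
  = assoc_inv A B (tens D E) ∘ ((idm A ⊗ assoc B D E) ∘ assoc A (tens B D) E).
Proof.
  apply a_inj. rewrite pent, <- tl, assoc_iso1, tensm_id, comp_id_r, aa'. reflexivity.
Qed.

Lemma II (P R S Q T Z : ob C) (k : hom Z _) :
  assoc_inv P (tens R S) (tens Q T) ∘ ((idm P ⊗ assoc (tens R S) Q T) ∘ (assoc P (tens (tens R S) Q) T ∘ ((((idm P ⊗ assoc_inv R S Q) ∘ assoc P R (tens S Q)) ⊗ idm T) ∘ k)))
 = (assoc P R S ⊗ idm (tens Q T)) ∘ (assoc_inv (tens P R) S (tens Q T) ∘ ((idm (tens P R) ⊗ assoc S Q T) ∘ (assoc (tens P R) (tens S Q) T ∘ k))).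
Proof.
  apply a_inj. rewrite aa', pentV, aa', anat_idl, pent, !trk.
  rewrite tl. ra. rewrite anat, trk, pentW. ra. reflexivity.
Qed.

Lemma I_lem (P Q R S : ob C) :
  (idm P ⊗ (assoc_inv R S Q ∘ ((idm R ⊗ swap Q S) ∘ (assoc R Q S ∘ (swap Q R ⊗ idm S))))) ∘ (assoc P (tens Q R) S ∘ (assoc P Q R ⊗ idm S))
  = ((idm P ⊗ assoc_inv R S Q) ∘ assoc P R (tens S Q)) ∘
    ((idm (tens P R) ⊗ swap Q S) ∘ (assoc (tens P R) Q S ∘ ((assoc_inv P R Q ∘ ((idm P ⊗ swap Q R) ∘ assoc P Q R)) ⊗ idm S))).
Proof.
  ra. rewrite anat_idl, trk, pent, trk, tl. ra. rewrite tlk, tlid by apply assoc_iso1.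
  rewrite tl, anat, trk. ra. reflexivity.
Qed.

Definition mid4 (P Q R S : ob C) : hom (tens (tens P Q) (tens R S)) (tens (tens P R) (tens Q S)) :=
  assoc_inv P R (tens Q S) ∘ ((idm P ⊗ (assoc R Q S ∘ ((swap Q R ⊗ idm S) ∘ assoc_inv Q R S))) ∘ assoc P Q (tens R S)).

Definition pi4 (P Q R : ob C) : hom (tens (tens P Q) R) (tens (tens P R) Q) :=
  assoc_inv P R Q ∘ ((idm P ⊗ swap Q R) ∘ assoc P Q R).

Lemma copy_tens' (X Y : ob C) : copy (tens X Y) = mid4 X X Y Y ∘ (copy X ⊗ copy Y).
Proof. rewrite copy_tens. unfold mid4. ra. reflexivity. Qed.

Lemma CI (P Q R S T : ob C) :
  (assoc P R S ⊗ idm (tens Q T)) ∘ (mid4 (tens P R) Q S T ∘ (assoc (tens (tens P R) Q) S T ∘ ((pi4 P Q R ⊗ idm S) ⊗ idm T)))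
  = mid4 P Q (tens R S) T ∘ (assoc (tens P Q) (tens R S) T ∘ (assoc (tens P Q) R S ⊗ idm T)).
Proof.
  unfold mid4, pi4. ra.
  rewrite (pent (A:=P)).
  rewrite (trk (E:=P)). ra. rewrite assoc_iso2, comp_id_r, (tr (E:=P)). ra.
  rewrite <- (anat (idm P)).
  rewrite <- (tl (E:=T)), <- (tl (E:=T)).
  rewrite (@pentagon C P Q R S). ra. rewrite (trk (E:=P)), hexi.
  rewrite (pent (A:=tens P R)).
  rewrite (trk (E:=tens P R)). ra. rewrite assoc_iso2, comp_id_r, (tr (E:=tens P R)). ra.
  rewrite <- (anat (idm (tens P R))).
  rewrite <- (tl (E:=T)), <- (tl (E:=T)).
  rewrite I_lem, (tl ((idm P ⊗ assoc_inv R S Q) ∘ assoc P R (tens S Q))), II. reflexivity.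
Qed.

Lemma tcl {A B D A' B' : ob C} (g : hom B D) (f : hom A B) (h : hom A' B') :
  (g ∘ f) ⊗ h = (g ⊗ h) ∘ (f ⊗ idm A').
Proof. rewrite <- tensm_comp, comp_id_r. reflexivity. Qed.

Lemma mid4_nat {P Q R S P' Q' R' S' : ob C} (a : hom P P') (b : hom Q Q') (c : hom R R') (d : hom S S') :
  mid4 P' Q' R' S' ∘ ((a ⊗ b) ⊗ (c ⊗ d)) = ((a ⊗ c) ⊗ (b ⊗ d)) ∘ mid4 P Q R S.
Proof.
  unfold mid4. ra. rewrite assoc_nat. ra. rewrite tm2, comp_id_l. ra.
  rewrite a'nat0, tm2, swap_nat, comp_id_l, tcl. ra. rewrite anat.
  rewrite <- (comp_id_r a), <- tm2, a'nat, comp_id_r. reflexivity.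
Qed.

Lemma mid4_natk {P Q R S P' Q' R' S' Z : ob C} (a : hom P P') (b : hom Q Q') (c : hom R R') (d : hom S S') (k : hom Z _) :
  mid4 P' Q' R' S' ∘ (((a ⊗ b) ⊗ (c ⊗ d)) ∘ k) = ((a ⊗ c) ⊗ (b ⊗ d)) ∘ (mid4 P Q R S ∘ k).
Proof. rewrite !cA, mid4_nat. reflexivity. Qed.

Lemma pi4_nat {P Q Q' R : ob C} (g : hom Q Q') :
  pi4 P Q' R ∘ ((idm P ⊗ g) ⊗ idm R) = (idm (tens P R) ⊗ g) ∘ pi4 P Q R.
Proof.
  unfold pi4. ra. rewrite assoc_nat. ra. rewrite trk, swap_nat, <- trk, a'nat, tensm_id. reflexivity.
Qed.

Lemma pi4_natk {P Q Q' R Z : ob C} (g : hom Q Q') (k : hom Z _) :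
  pi4 P Q' R ∘ (((idm P ⊗ g) ⊗ idm R) ∘ k) = (idm (tens P R) ⊗ g) ∘ (pi4 P Q R ∘ k).
Proof. rewrite !cA, pi4_nat. reflexivity. Qed.

Lemma coassoc' {X : ob C} : assoc_inv X X X ∘ ((idm X ⊗ copy X) ∘ copy X) = (copy X ⊗ idm X) ∘ copy X.
Proof. rewrite <- coassoc, a'a. reflexivity. Qed.

Lemma D2 {X : ob C} : copy (tens X X) ∘ copy X = (copy X ⊗ copy X) ∘ copy X.
Proof.
  rewrite copy_tens'. unfold mid4. ra.
  rewrite (tsplit2 (copy X) (copy X)). ra. rewrite anat_idl, coassoc, !trk. ra.
  rewrite coassoc', tlk, cocomm, coassoc.
  rewrite tr. ra. rewrite a'nat, coassoc', tensm_id, tm2, comp_id_l, comp_id_r. reflexivity.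
Qed.

Definition T3 (X : ob C) : hom X (tens X (tens X X)) := (idm X ⊗ copy X) ∘ copy X.

Lemma D4 {X : ob C} : (copy X ⊗ copy X) ∘ copy X = pi4 X (tens X X) X ∘ ((T3 X ⊗ idm X) ∘ copy X).
Proof.
  unfold T3. rewrite tl. ra. rewrite pi4_natk.
  unfold pi4. ra. rewrite coassoc, trk, cocomm, coassoc'.
  rewrite tm2, comp_id_l, comp_id_r. reflexivity.
Qed.

Lemma CIk (P Q R S T Z : ob C) (k : hom Z _) :
  (assoc P R S ⊗ idm (tens Q T)) ∘ (mid4 (tens P R) Q S T ∘ (assoc (tens (tens P R) Q) S T ∘ (((pi4 P Q R ⊗ idm S) ⊗ idm T) ∘ k)))
  = mid4 P Q (tens R S) T ∘ (assoc (tens P Q) (tens R S) T ∘ ((assoc (tens P Q) R S ⊗ idm T) ∘ k)).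
Proof.
  pose proof (f_equal (fun x => x ∘ k) (CI P Q R S T)) as H. simpl in H.
  repeat rewrite <- cA in H. exact H.
Qed.

Lemma copyR {A Y : ob C} (y : hom A Y) :
  (y ⊗ copy A) ∘ copy A = assoc Y A A ∘ (((y ⊗ idm A) ⊗ idm A) ∘ ((copy A ⊗ idm A) ∘ copy A)).
Proof.
  rewrite tsplit1. ra. rewrite <- coassoc, <- tensm_id, anat. reflexivity.
Qed.

Definition Mp {A X : ob C} (p : hom A X) : hom A (tens (tens X X) A) :=
  (copy X ⊗ idm A) ∘ ((p ⊗ idm A) ∘ copy A).

Definition G (X A E' : ob C) : hom (tens (tens X E') A) (tens (tens X E') (tens (tens X X) A)) :=
  mid4 X (tens X X) E' A ∘ (assoc (tens X (tens X X)) E' A ∘ ((T3 X ⊗ idm E') ⊗ idm A)).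

Definition Nf {A X E' : ob C} (p : hom A X) (f : hom (tens X A) E') :
  hom A (tens (tens X E') (tens (tens X X) A)) :=
  ((idm X ⊗ f) ⊗ idm (tens (tens X X) A)) ∘ (mid4 X (tens X X) (tens X A) A ∘ (assoc (tens X (tens X X)) (tens X A) A ∘ ((assoc (tens X (tens X X)) X A ⊗ idm A) ∘ (((((T3 X ⊗ idm X) ∘ (copy X ∘ p)) ⊗ idm A) ⊗ idm A) ∘ ((copy A ⊗ idm A) ∘ copy A))))).

Lemma KEY_L {A X E' : ob C} (p : hom A X) (f : hom (tens X A) E') :
  (((idm X ⊗ f) ∘ assoc X X A) ⊗ idm (tens (tens X X) A)) ∘ (copy (tens (tens X X) A) ∘ Mp p) = Nf p f.
Proof.
  unfold Mp, Nf. rewrite (copy_tens' (tens X X) A). ra.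
  rewrite tm2, comp_id_r, D2, D4, tm2, comp_id_r, copyR.
  rewrite tl. ra. rewrite tl, tl. ra. rewrite CIk. reflexivity.
Qed.

Definition piD {A X : ob C} (p : hom A X) : hom A (tens X (tens X A)) :=
  assoc X X A ∘ ((copy X ⊗ idm A) ∘ ((p ⊗ idm A) ∘ copy A)).

Lemma KEY_R {A X E' : ob C} (p : hom A X) (f : hom (tens X A) E') :
  G X A E' ∘ ((((idm X ⊗ f) ∘ piD p) ⊗ idm A) ∘ copy A) = Nf p f.
Proof.
  unfold G, piD, Nf. ra. rewrite !tl. ra.
  rewrite (tlk (T3 X ⊗ idm E')), tcomm, (tl (idm _ ⊗ f)). ra.
  rewrite anat, <- (@tensm_id C X (tens X X)), mid4_natk, !tensm_id.
  rewrite (tlk (T3 X ⊗ idm (tens X A))), <- (@tensm_id C X A), <- assoc_nat, tl. ra.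
  reflexivity.
Qed.


Lemma anat_id {X Y Y' Z Z' W : ob C} (g : hom Y Y') (h : hom Z Z') (k : hom W _) :
  (idm X ⊗ (g ⊗ h)) ∘ (assoc X Y Z ∘ k) = assoc X Y' Z' ∘ (((idm X ⊗ g) ⊗ h) ∘ k).
Proof. rewrite !cA, assoc_nat. reflexivity. Qed.

Lemma piD_dil {A X : ob C} (p : hom A X) : is_dilation p (piD p).
Proof.
  unfold is_dilation, marg1, piD.
  rewrite del_tens, tr, <- cA, anat_id.
  rewrite (rw2 (triangle _ _)).
  rewrite tm2.
  rewrite (rw2 (eq_sym (tensm_comp _ _ _ _))), comp_id_r.
  rewrite comp_id_l, <- (cA (runit X)), counit_r.
  rewrite tm2, comp_id_l, comp_id_r, tsplit1, <- cA, (rw2 (runit_nat _)), <- cA, counit_r, comp_id_r.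
  reflexivity.
Qed.

Lemma margR {A W W' F : ob C} (u : hom W W') (r : hom A (tens W F)) :
  marg1 ((u ⊗ idm F) ∘ r) = u ∘ marg1 r.
Proof.
  unfold marg1. rewrite (cA (idm W' ⊗ del F)), <- tcomm. ra.
  rewrite (rw2 (runit_nat _)). ra. reflexivity.
Qed.

Lemma MAIN_SHAPE {A X E' F : ob C} (p : hom A X) (f : hom (tens X A) E')
  (h : hom (tens (tens (tens X X) A) A) F) :
  ((idm X ⊗ f) ⊗ idm F) ∘ ((assoc X X A ⊗ idm F) ∘ ((idm (tens (tens X X) A) ⊗ h) ∘ (assoc (tens (tens X X) A) (tens (tens X X) A) A ∘ ((copy (tens (tens X X) A) ⊗ idm A) ∘ ((Mp p ⊗ idm A) ∘ copy A)))))
  = (idm _ ⊗ h) ∘ (assoc _ _ _ ∘ ((((((idm X ⊗ f) ∘ assoc X X A) ⊗ idm _) ∘ (copy (tens (tens X X) A) ∘ Mp p)) ⊗ idm A) ∘ copy A)).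
Proof.
  rewrite tlk, cA, tcomm. ra.
  rewrite <- (@tensm_id C (tens (tens X X) A) A), <- anat, tlk, tlk. ra. reflexivity.
Qed.

Lemma KEY {A X E' : ob C} (p : hom A X) (f : hom (tens X A) E') :
  (((idm X ⊗ f) ∘ assoc X X A) ⊗ idm (tens (tens X X) A)) ∘ (copy (tens (tens X X) A) ∘ Mp p)
  = G X A E' ∘ ((((idm X ⊗ f) ∘ piD p) ⊗ idm A) ∘ copy A).
Proof. rewrite KEY_L, KEY_R. reflexivity. Qed.

End S.

Theorem proposition4p13 :
  forall (C : MarkovCat), has_conditionals C ->
  forall (A X : ob C) (p : hom A X),
    exists (E : ob C) (pi : hom A (tens X E)), is_initial_dilation p pi.
Proof.
  intros C Hc A X p. exists (tens X A), (piD p). split.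
  - apply piD_dil.
  - intros E' pi' Hpi'. split.
    + destruct (Hc A X E' pi') as [g Hg]. exists g.
      unfold is_conditional in Hg. unfold is_dilation in Hpi'. rewrite Hpi' in Hg.
      rewrite Hg. reflexivity.
    + intros f1 f2 H1 H2. unfold dil_equal. intros F rho Hrho.
      unfold is_dilation in Hrho.
      destruct (Hc A _ F (comp (tensm (assoc_inv X X A) (idm F)) rho)) as [h Hh].
      unfold is_conditional in Hh.
      rewrite margR, Hrho in Hh. unfold piD in Hh. rewrite a'a in Hh.
      assert (Hr : rho = comp (tensm (assoc X X A) (idm F)) (comp (tensm (assoc_inv X X A) (idm F)) rho)).
      { rewrite cA, <- tl, assoc_iso1, tensm_id, comp_id_l. reflexivity. }
      rewrite Hr, Hh. fold (Mp p).
      rewrite !MAIN_SHAPE, !KEY, H1, H2. reflexivity.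
Qed.
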